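(* There exists a two-player differentiable game with parameters $\theta=(x,y)\in\mathbb{R}\times\mathbb{R}$ which is a smooth market, whose losses $L^1,L^2$ are both coercive and analytic, which is nondegenerate, and whose only critical point is a strict maximum.
   Context: A differentiable game consists of $n$ players with parameters $\theta=(\theta^1,\dots,\theta^n)\in\mathbb{R}^d$, $\theta^i\in\mathbb{R}^{d_i}$, $\sum_i d_i=d$, and twice continuously differentiable losses $L^i:\mathbb{R}^d\to\mathbb{R}$. The simultaneous gradient is $\xi=(\nabla_{\theta^1}L^1,\dots,\nabla_{\theta^n}L^n)\in\mathbb{R}^d$, and the game Hessian is $H=\nabla\xi$ (the $d\times d$ matrix with blocks $\nabla_{\theta^j}\nabla_{\theta^i}L^i$). A critical point is a $\bar\theta$ with $\xi(\bar\theta)=0$. A critical point is a strict (local) maximum if $H(\bar\theta)\prec 0$, meaning $u^\top H(\bar\theta)u<0$ for all nonzero $u$. The game is a (smooth) market if $L^i(\theta)=L^i(\theta^i)+\sum_{j\ne i}g_{ij}(\theta^i,\theta^j)$ with $g_{ij}(\theta^i,\theta^j)+g_{ji}(\theta^j,\theta^i)=0$ for all $i,j$ (pairwise zero-sum interactions). A loss is coercive if $L^i(\theta)\to\infty$ as $\|\theta\|\to\infty$; the game is coercive if all its losses are. The game is nondegenerate if $H$ is invertible at every critical point. *)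

(* Defs.v *)
From Stdlib Require Import Reals.
From Coquelicot Require Import Coquelicot.
Open Scope R_scope.

(* A two-player game with theta = (x, y) in R x R; player 1 controls x,
   player 2 controls y.  Losses are functions L : R -> R -> R, L x y. *)

(* Real analyticity of a function on R^2: around every point (a,b) it equals
   an absolutely convergent double power series
     sum_{i,j} c i j (x-a)^i (y-b)^j.
   The double series is enumerated by total degree n = i + j; absolute
   convergence makes the value independent of the enumeration. *)
Definition dterm (c : nat -> nat -> R) (a b x y : R) (n : nat) : R :=
  sum_f_R0 (fun i => c i (n - i)%nat * (x - a) ^ i * (y - b) ^ (n - i)) n.

Definition dterm_abs (c : nat -> nat -> R) (a b x y : R) (n : nat) : R :=
  sum_f_R0 (fun i => Rabs (c i (n - i)%nat) * Rabs (x - a) ^ i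
                      * Rabs (y - b) ^ (n - i)) n.

Definition analytic2 (L : R -> R -> R) : Prop :=
  forall a b : R, exists r : R, 0 < r /\
    exists c : nat -> nat -> R,
      forall x y : R, Rabs (x - a) < r -> Rabs (y - b) < r ->
        ex_series (dterm_abs c a b x y) /\ is_series (dterm c a b x y) (L x y).

Definition coercive2 (L : R -> R -> R) : Prop :=
  forall M : R, exists K : R, forall x y : R,
    sqrt (x ^ 2 + y ^ 2) > K -> L x y > M.

Definition xi1 (L1 : R -> R -> R) (x y : R) : R := Derive (fun u => L1 u y) x.
Definition xi2 (L2 : R -> R -> R) (x y : R) : R := Derive (fun v => L2 x v) y.

Definition H11 (L1 L2 : R -> R -> R) (x y : R) : R :=
  Derive (fun u => xi1 L1 u y) x.
Definition H12 (L1 L2 : R -> R -> R) (x y : R) : R :=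
  Derive (fun v => xi1 L1 x v) y.
Definition H21 (L1 L2 : R -> R -> R) (x y : R) : R :=
  Derive (fun u => xi2 L2 u y) x.
Definition H22 (L1 L2 : R -> R -> R) (x y : R) : R :=
  Derive (fun v => xi2 L2 x v) y.

Definition critical (L1 L2 : R -> R -> R) (x y : R) : Prop :=
  xi1 L1 x y = 0 /\ xi2 L2 x y = 0.

Definition hess_invertible (L1 L2 : R -> R -> R) (x y : R) : Prop :=
  H11 L1 L2 x y * H22 L1 L2 x y - H12 L1 L2 x y * H21 L1 L2 x y <> 0.

Definition nondegenerate (L1 L2 : R -> R -> R) : Prop :=
  forall x y, critical L1 L2 x y -> hess_invertible L1 L2 x y.

Definition hess_neg_def (L1 L2 : R -> R -> R) (x y : R) : Prop :=
  forall u1 u2 : R, (u1 <> 0 \/ u2 <> 0) ->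
    u1 * (H11 L1 L2 x y * u1 + H12 L1 L2 x y * u2)
    + u2 * (H21 L1 L2 x y * u1 + H22 L1 L2 x y * u2) < 0.

Definition strict_max (L1 L2 : R -> R -> R) (x y : R) : Prop :=
  critical L1 L2 x y /\ hess_neg_def L1 L2 x y.

Definition market2 (L1 L2 : R -> R -> R) : Prop :=
  exists (f1 f2 : R -> R) (g12 g21 : R -> R -> R),
    (forall x y, g12 x y + g21 y x = 0) /\
    (forall x y, L1 x y = f1 x + g12 x y) /\
    (forall x y, L2 x y = f2 y + g21 y x).

(* Main.v *)
Require Import Defs.
From Stdlib Require Import Reals Lra Psatz.
From Coquelicot Require Import Coquelicot.
Open Scope R_scope.

Definition L1 (x y : R) : R := x^4/4 - x^2/2 + x*y + y^4.
Definition L2 (x y : R) : R := y^4/4 - y^2/2 - x*y + x^4.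

Lemma xi1E x y : xi1 L1 x y = x^3 - x + y.
Proof. unfold xi1, L1. apply is_derive_unique. auto_derive; auto; field. Qed.
Lemma xi2E x y : xi2 L2 x y = y^3 - y - x.
Proof. unfold xi2, L2. apply is_derive_unique. auto_derive; auto; field. Qed.

Lemma H11E x y : H11 L1 L2 x y = 3*x^2 - 1.
Proof. unfold H11. rewrite (Derive_ext _ (fun u => u^3 - u + y)) by (intro; apply xi1E).
  apply is_derive_unique. auto_derive; auto; field. Qed.
Lemma H12E x y : H12 L1 L2 x y = 1.
Proof. unfold H12. rewrite (Derive_ext _ (fun v => x^3 - x + v)) by (intro; apply xi1E).
  apply is_derive_unique. auto_derive; auto. Qed.
Lemma H21E x y : H21 L1 L2 x y = -1.
Proof. unfold H21. rewrite (Derive_ext _ (fun u => y^3 - y - u)) by (intro; apply xi2E).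
  apply is_derive_unique. auto_derive; auto; field. Qed.
Lemma H22E x y : H22 L1 L2 x y = 3*y^2 - 1.
Proof. unfold H22. rewrite (Derive_ext _ (fun v => v^3 - v - x)) by (intro; apply xi2E).
  apply is_derive_unique. auto_derive; auto; field. Qed.

Lemma crit_unique x y : critical L1 L2 x y -> x = 0 /\ y = 0.
Proof.
  unfold critical; rewrite xi1E, xi2E; intros [e1 e2].
  set (s := x^2 + y^2).
  assert (A0 : x*(x^3-x+y) + y*(y^3-y-x) = 0) by (rewrite e1, e2; ring).
  assert (B0 : y*(x^3-x+y) - x*(y^3-y-x) = 0) by (rewrite e1, e2; ring).
  assert (A : x^4 + y^4 = s) by (unfold s; ring_simplify in A0; lra).
  assert (B : x*y*(x^2-y^2) + s = 0) by (unfold s; ring_simplify in B0; ring_simplify; lra).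
  assert (C : s^2 + 4*(x*y*(x^2-y^2)) = (x^2-y^2+2*x*y)^2) by (unfold s; ring).
  assert (D0 : s^2 + (x^2-y^2)^2 = 2*(x^4+y^4)) by (unfold s; ring).
  assert (D1 : 0 <= (x^2-y^2)^2) by apply pow2_ge_0.
  assert (C1 : 0 <= (x^2-y^2+2*x*y)^2) by apply pow2_ge_0.
  assert (D : s^2 <= 2*s) by lra.
  assert (S0 : 0 <= s) by (unfold s; nra).
  assert (E1 : 4*s <= s^2) by lra.
  assert (E : s = 0) by nra.
  unfold s in E. split; nra.
Qed.

Lemma fin_series (f : nat -> R) l :
  (forall n, (4 < n)%nat -> f n = 0) -> sum_f_R0 f 4 = l -> is_series f l.
Proof.
  intros Hz Hs. apply is_series_Reals. intros eps Heps. exists 4%nat. intros n Hn.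
  assert (K : forall k, sum_f_R0 f (4 + k) = sum_f_R0 f 4).
  { induction k. reflexivity.
    change (4 + S k)%nat with (S (4 + k)). rewrite tech5.
    rewrite IHk, Hz by lia. ring. }
  replace n with (4 + (n - 4))%nat by lia. rewrite K, Hs.
  unfold R_dist. rewrite Rminus_diag, Rabs_R0. exact Heps.
Qed.

Lemma analytic_of (L : R -> R -> R) (c : R -> R -> nat -> nat -> R) :
  (forall a b i j, (4 < i + j)%nat -> c a b i j = 0) ->
  (forall a b x y, sum_f_R0 (dterm (c a b) a b x y) 4 = L x y) -> analytic2 L.
Proof.
  intros Hc Hs a b. exists 1. split; [lra|]. exists (c a b). intros x y _ _. split.
  - exists (sum_f_R0 (dterm_abs (c a b) a b x y) 4). apply fin_series; [|reflexivity].
    intros n Hn. unfold dterm_abs. apply sum_eq_R0. intros i Hi.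
    rewrite Hc by lia. rewrite Rabs_R0. ring.
  - apply fin_series; [|apply Hs].
    intros n Hn. unfold dterm. apply sum_eq_R0. intros i Hi.
    rewrite Hc by lia. ring.
Qed.

Definition c1 (a b : R) (i j : nat) : R :=
  match i, j with
  | 0, 0 => a^4/4 - a^2/2 + a*b + b^4
  | 1, 0 => a^3 - a + b
  | 0, 1 => a + 4*b^3
  | 2, 0 => 3/2*a^2 - 1/2
  | 1, 1 => 1
  | 0, 2 => 6*b^2
  | 3, 0 => a
  | 0, 3 => 4*b
  | 4, 0 => 1/4
  | 0, 4 => 1
  | _, _ => 0
  end.

Definition c2 (a b : R) (i j : nat) : R :=
  match i, j with
  | 0, 0 => b^4/4 - b^2/2 - a*b + a^4
  | 0, 1 => b^3 - b - a
  | 1, 0 => - b + 4*a^3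
  | 0, 2 => 3/2*b^2 - 1/2
  | 1, 1 => -1
  | 2, 0 => 6*a^2
  | 0, 3 => b
  | 3, 0 => 4*a
  | 0, 4 => 1/4
  | 4, 0 => 1
  | _, _ => 0
  end.

Lemma c1_zero a b i j : (4 < i + j)%nat -> c1 a b i j = 0.
Proof.
  intros H. destruct i as [|[|[|[|[|i]]]]]; destruct j as [|[|[|[|[|j]]]]];
  simpl in *; try lia; reflexivity.
Qed.
Lemma c2_zero a b i j : (4 < i + j)%nat -> c2 a b i j = 0.
Proof.
  intros H. destruct i as [|[|[|[|[|i]]]]]; destruct j as [|[|[|[|[|j]]]]];
  simpl in *; try lia; reflexivity.
Qed.

Lemma an1 : analytic2 L1.
Proof.
  apply (analytic_of _ c1). apply c1_zero.
  intros a b x y. unfold dterm, L1. cbn [sum_f_R0 c1 Nat.sub]. field.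
Qed.
Lemma an2 : analytic2 L2.
Proof.
  apply (analytic_of _ c2). apply c2_zero.
  intros a b x y. unfold dterm, L2. cbn [sum_f_R0 c2 Nat.sub]. field.
Qed.

Lemma coer_gen (L : R -> R -> R) :
  (forall x y, (x^2+y^2)^2/8 - (x^2+y^2) <= L x y) -> coercive2 L.
Proof.
  intros Hb M. exists (16 + 8 * Rabs M). intros x y Hk.
  set (s := x^2 + y^2) in *.
  assert (S0 : 0 <= s) by (unfold s; nra).
  assert (HM : 0 <= Rabs M) by apply Rabs_pos.
  assert (HM2 : M <= Rabs M) by apply Rle_abs.
  assert (Hs : s = sqrt s * sqrt s) by (rewrite sqrt_sqrt; lra).
  assert (Hq : 16 + 8 * Rabs M <= s) by nra.
  specialize (Hb x y). fold s in Hb. nra.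
Qed.

Lemma co1 : coercive2 L1.
Proof.
  apply coer_gen. intros x y. unfold L1.
  assert (0 <= (x+y)^2) by apply pow2_ge_0.
  assert (0 <= (x^2-y^2)^2) by apply pow2_ge_0.
  assert (0 <= y^4) by nra.
  nra.
Qed.
Lemma co2 : coercive2 L2.
Proof.
  apply coer_gen. intros x y. unfold L2.
  assert (0 <= (x-y)^2) by apply pow2_ge_0.
  assert (0 <= (x^2-y^2)^2) by apply pow2_ge_0.
  assert (0 <= x^4) by nra.
  nra.
Qed.

Theorem theorem1 :
  exists L1 L2 : R -> R -> R,
    market2 L1 L2 /\
    coercive2 L1 /\ coercive2 L2 /\
    analytic2 L1 /\ analytic2 L2 /\
    nondegenerate L1 L2 /\
    exists x0 y0 : R,
      strict_max L1 L2 x0 y0 /\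
      (forall x y, critical L1 L2 x y -> x = x0 /\ y = y0).
Proof.
  exists L1, L2. split; [|split; [exact co1|split; [exact co2|split; [exact an1|split; [exact an2|split]]]]].
  - exists (fun x => 5/4*x^4 - x^2/2), (fun y => 5/4*y^4 - y^2/2),
      (fun x y => x*y + y^4 - x^4), (fun y x => -(x*y + y^4 - x^4)).
    split; [|split]; intros x y; unfold L1, L2; field.
  - intros x y Hc. destruct (crit_unique x y Hc); subst.
    unfold hess_invertible. rewrite H11E, H12E, H21E, H22E. lra.
  - exists 0, 0. split; [|exact crit_unique]. split.
    + unfold critical. rewrite xi1E, xi2E. split; ring.
    + intros u1 u2 Hu. rewrite H11E, H12E, H21E, H22E.
      destruct Hu as [Hu|Hu].
      * assert (0 < u1*u1) by (apply Rsqr_pos_lt; exact Hu). nra.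
      * assert (0 < u2*u2) by (apply Rsqr_pos_lt; exact Hu). nra.
Qed.
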